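(* Let $N\ge2$, let $W_1,\dots,W_N\in\mathbb{R}^{p\times q}$, $X_1,\dots,X_N\in\mathbb{R}^{q\times r}$, $\widetilde X_1,\dots,\widetilde X_N\in\mathbb{R}^{p\times\widetilde q}$ and $V_1,\dots,V_N\in\mathbb{R}^{\widetilde q\times r}$ be matrices, $\bar X=\frac1N\sum_kX_k$, $\bar{\widetilde X}=\frac1N\sum_k\widetilde X_k$. For a permutation $\pi$ of $[N]$ and $k\in[N]$ define \[\Sigma^\pi_{\ge k}=\frac1{N+1-k}\sum_{i=k}^N(X_{\pi(i)}-\bar X)(X_{\pi(i)}-\bar X)^\top,\qquad\widetilde\Sigma^\pi_{\ge k}=\frac1{N+1-k}\sum_{i=k}^N(\widetilde X_{\pi(i)}-\bar{\widetilde X})^\top(\widetilde X_{\pi(i)}-\bar{\widetilde X}).\] Then, with $\mathscr{S}_N$ the set of permutations of $[N]$, in the positive semidefinite order, \[ \frac1{N!}\sum_{\pi\in\mathscr{S}_N}\sum_{k=1}^NW_{\pi(k)}\Sigma^\pi_{\ge k}W_{\pi(k)}^\top\preceq\frac{\widetilde\sigma^2_X}{1+\epsilon_N}\sum_{k=1}^NW_kW_k^\top,\qquad\frac1{N!}\sum_{\pi\in\mathscr{S}_N}\sum_{k=1}^NV_{\pi(k)}^\top\widetilde\Sigma^\pi_{\ge k}V_{\pi(k)}\preceq\frac{\widetilde\sigma^2_{\widetilde X}}{1+\epsilon_N}\sum_{k=1}^NV_k^\top V_k. \]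
   Context: $\|\cdot\|$ is the operator norm. $\Sigma=\frac1N\sum_k(X_k-\bar X)(X_k-\bar X)^\top$, $\widetilde\Sigma=\frac1N\sum_k(\widetilde X_k-\bar{\widetilde X})^\top(\widetilde X_k-\bar{\widetilde X})$, $\widetilde\sigma^2_X=\|\Sigma\|+\epsilon_N\max_k\|X_k-\bar X\|^2$, $\widetilde\sigma^2_{\widetilde X}=\|\widetilde\Sigma\|+\epsilon_N\max_k\|\widetilde X_k-\bar{\widetilde X}\|^2$. $H_n=\sum_{j\le n}\frac1j$, $\epsilon_n=\frac{H_n-1}{n-H_n}$ for $n\ge2$. *)

(* Defs.v *)
From HB Require Import structures.
From mathcomp Require Import all_boot all_order all_algebra perm.
From mathcomp Require Import classical_sets.
From mathcomp Require Import reals.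
Set Implicit Arguments. Unset Strict Implicit. Unset Printing Implicit Defensive.
Import Order.TTheory GRing.Theory Num.Theory.
Local Open Scope ring_scope.

Definition vnorm2 (R : realType) (n : nat) (x : 'cV[R]_n) : R :=
  \sum_(i < n) (x i 0) ^+ 2.

Definition opnorm (R : realType) (m n : nat) (A : 'M[R]_(m, n)) : R :=
  reals.sup [set Num.sqrt (vnorm2 (A *m x)) | x in [set x : 'cV[R]_n | vnorm2 x <= 1]]%classic.

Definition psd_le (R : realType) (n : nat) (A B : 'M[R]_n) : Prop :=
  forall x : 'cV[R]_n, 0 <= (x^T *m (B - A) *m x) 0 0.

Definition harm (R : realType) (n : nat) : R := \sum_(j < n) ((j.+1)%:R)^-1.

Definition epsN (R : realType) (n : nat) : R := (harm R n - 1) / (n%:R - harm R n).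

Definition mean (R : realType) (N m n : nat) (X : 'I_N -> 'M[R]_(m, n)) : 'M[R]_(m, n) :=
  (N%:R)^-1 *: \sum_(k < N) X k.

(* Main.v *)
Require Import Defs.
From HB Require Import structures.
From mathcomp Require Import all_boot all_order all_algebra perm.
From mathcomp Require Import classical_sets.
From mathcomp Require Import reals.
From mathcomp Require Import ring lra zify.
Import Order.TTheory GRing.Theory Num.Theory.
Set Implicit Arguments. Unset Strict Implicit. Unset Printing Implicit Defensive.
Local Open Scope ring_scope.

Section Aux.
Variable R : realType.

Lemma cs_sum (n : nat) (a b : 'I_n -> R) :
  (\sum_i a i * b i) ^+ 2 <= (\sum_i a i ^+ 2) * (\sum_i b i ^+ 2).
Proof.
have H : 0 <= \sum_i \sum_j (a i * b j - a j * b i) ^+ 2.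
  by apply: sumr_ge0 => i _; apply: sumr_ge0 => j _; apply: sqr_ge0.
have E1 : (\sum_i a i ^+ 2) * (\sum_i b i ^+ 2) =
    \sum_i \sum_j (a i ^+ 2 * b j ^+ 2).
  by rewrite mulr_suml; apply: eq_bigr => i _; rewrite mulr_sumr.
have E2 : (\sum_i a i * b i) ^+ 2 = \sum_i \sum_j (a i * b i * (a j * b j)).
  by rewrite expr2 mulr_suml; apply: eq_bigr => i _; rewrite mulr_sumr.
have E3 : \sum_i \sum_j (a j ^+ 2 * b i ^+ 2) = \sum_i \sum_j (a i ^+ 2 * b j ^+ 2).
  by rewrite exchange_big.
have E : \sum_i \sum_j (a i * b j - a j * b i) ^+ 2 =
   \sum_i \sum_j (a i ^+ 2 * b j ^+ 2) + \sum_i \sum_j (a j ^+ 2 * b i ^+ 2)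
   - 2 * \sum_i \sum_j (a i * b i * (a j * b j)).
  rewrite -big_split /= mulr_sumr -sumrN -big_split /=.
  apply: eq_bigr => i _; rewrite mulr_sumr -sumrN -!big_split /=.
  by apply: eq_bigr => j _; ring.
rewrite E E3 -E1 -E2 in H; lra.
Qed.

Lemma vnorm2_ge0 n (x : 'cV[R]_n) : 0 <= vnorm2 x.
Proof. by apply: sumr_ge0 => i _; apply: sqr_ge0. Qed.

Lemma dotE n (x y : 'cV[R]_n) : (x^T *m y) 0 0 = \sum_i x i 0 * y i 0.
Proof. by rewrite mxE; apply: eq_bigr => i _; rewrite mxE. Qed.

Lemma dot_self n (x : 'cV[R]_n) : (x^T *m x) 0 0 = vnorm2 x.
Proof. by rewrite dotE; apply: eq_bigr => i _; rewrite expr2. Qed.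

Lemma dot_le n (x y : 'cV[R]_n) :
  (x^T *m y) 0 0 <= Num.sqrt (vnorm2 x) * Num.sqrt (vnorm2 y).
Proof.
rewrite dotE -sqrtrM ?vnorm2_ge0 //.
apply: (le_trans (ler_norm _)).
rewrite -sqrtr_sqr ler_sqrt; last by rewrite mulr_ge0 // vnorm2_ge0.
exact: cs_sum.
Qed.

Definition frob m n (A : 'M[R]_(m, n)) := \sum_i \sum_j A i j ^+ 2.

Lemma frob_ge0 m n (A : 'M[R]_(m, n)) : 0 <= frob A.
Proof. by apply: sumr_ge0 => i _; apply: sumr_ge0 => j _; apply: sqr_ge0. Qed.

Lemma vnorm2_mul_le m n (A : 'M[R]_(m, n)) x :
  vnorm2 (A *m x) <= frob A * vnorm2 x.
Proof.
rewrite /frob /vnorm2 mulr_suml; apply: ler_sum => i _.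
rewrite mxE; exact: cs_sum.
Qed.

Lemma vnorm2Z n c (x : 'cV[R]_n) : vnorm2 (c *: x) = c ^+ 2 * vnorm2 x.
Proof. by rewrite /vnorm2 mulr_sumr; apply: eq_bigr => i _; rewrite mxE exprMn. Qed.

Lemma opnorm_has_ub m n (A : 'M[R]_(m, n)) :
  has_ubound [set Num.sqrt (vnorm2 (A *m x)) | x in [set x : 'cV[R]_n | vnorm2 x <= 1]]%classic.
Proof.
exists (Num.sqrt (frob A)) => _ [x /= hx <-].
rewrite ler_sqrt ?frob_ge0 //; apply: (le_trans (vnorm2_mul_le A x)).
by rewrite -{2}(mulr1 (frob A)) ler_wpM2l // frob_ge0.
Qed.

Lemma opnorm_le m n (A : 'M[R]_(m, n)) x :
  vnorm2 x <= 1 -> Num.sqrt (vnorm2 (A *m x)) <= opnorm A.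
Proof. by move=> hx; apply: (ub_le_sup (opnorm_has_ub A)); exists x. Qed.

Lemma opnorm_ge0 m n (A : 'M[R]_(m, n)) : 0 <= opnorm A.
Proof.
have := @opnorm_le m n A 0; rewrite mulmx0.
have -> : vnorm2 (0 : 'cV[R]_n) = 0 by rewrite /vnorm2 big1 // => i _; rewrite mxE expr0n.
have -> : vnorm2 (0 : 'cV[R]_m) = 0 by rewrite /vnorm2 big1 // => i _; rewrite mxE expr0n.
by rewrite sqrtr0 => ->.
Qed.

Lemma opnorm_bound m n (A : 'M[R]_(m, n)) x :
  Num.sqrt (vnorm2 (A *m x)) <= opnorm A * Num.sqrt (vnorm2 x).
Proof.
have [h0|hpos] := eqVneq (vnorm2 x) 0.
  have : vnorm2 (A *m x) <= 0 by have := vnorm2_mul_le A x; rewrite h0 mulr0.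
  move=> hle; have -> : vnorm2 (A *m x) = 0 by apply/eqP; rewrite eq_le hle vnorm2_ge0.
  by rewrite h0 sqrtr0 mulr0.
set t := Num.sqrt (vnorm2 x).
have tpos : 0 < t by rewrite sqrtr_gt0 lt_def hpos vnorm2_ge0.
have tt : t ^+ 2 = vnorm2 x by rewrite sqr_sqrtr // vnorm2_ge0.
have h1 : vnorm2 (t^-1 *: x) <= 1.
  by rewrite vnorm2Z -tt exprVn mulVf // expf_neq0 // gt_eqF.
have := opnorm_le A h1.
have ti : 0 <= t^-1 by rewrite invr_ge0 ltW.
rewrite -scalemxAr vnorm2Z sqrtrM ?exprn_ge0 // sqrtr_sqr ger0_norm // => h.
by rewrite -ler_pdivrMr // mulrC.
Qed.

Lemma sq_sqrt_vn n (x : 'cV[R]_n) : Num.sqrt (vnorm2 x) ^+ 2 = vnorm2 x.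
Proof. by rewrite sqr_sqrtr // vnorm2_ge0. Qed.

Lemma bound_S n (S : 'M[R]_n) u :
  (u^T *m S *m u) 0 0 <= opnorm S * vnorm2 u.
Proof.
rewrite -mulmxA; apply: (le_trans (dot_le _ _)).
rewrite -[in X in _ <= X](sq_sqrt_vn u) expr2 mulrA [opnorm S * _]mulrC -mulrA.
by rewrite ler_wpM2l ?sqrtr_ge0 // opnorm_bound.
Qed.

Lemma bound_YtY m n (Y : 'M[R]_(m, n)) u :
  (u^T *m (Y^T *m Y) *m u) 0 0 <= opnorm Y ^+ 2 * vnorm2 u.
Proof.
rewrite mulmxA -trmx_mul -mulmxA dot_self -(sq_sqrt_vn (Y *m u)) -(sq_sqrt_vn u).
rewrite -exprMn lerXn2r //; last exact: opnorm_bound.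
  by rewrite nnegrE sqrtr_ge0.
by rewrite nnegrE mulr_ge0 ?opnorm_ge0 ?sqrtr_ge0.
Qed.

Lemma bound_YYt m n (Y : 'M[R]_(m, n)) u :
  (u^T *m (Y *m Y^T) *m u) 0 0 <= opnorm Y ^+ 2 * vnorm2 u.
Proof.
set z := Y^T *m u.
have E : (u^T *m (Y *m Y^T) *m u) 0 0 = vnorm2 z.
  by rewrite -dot_self /z trmx_mul trmxK !mulmxA.
have E2 : vnorm2 z = (u^T *m (Y *m z)) 0 0.
  by rewrite -dot_self /z trmx_mul trmxK !mulmxA.
have h : Num.sqrt (vnorm2 z) ^+ 2 <=
   Num.sqrt (vnorm2 u) * opnorm Y * Num.sqrt (vnorm2 z).
  rewrite sq_sqrt_vn {1}E2; apply: (le_trans (dot_le _ _)).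
  by rewrite -mulrA ler_wpM2l ?sqrtr_ge0 // opnorm_bound.
have h2 : Num.sqrt (vnorm2 z) <= Num.sqrt (vnorm2 u) * opnorm Y.
  have [z0|zp] := eqVneq (Num.sqrt (vnorm2 z)) 0.
    by rewrite z0 mulr_ge0 ?sqrtr_ge0 ?opnorm_ge0.
  have zpos : 0 < Num.sqrt (vnorm2 z) by rewrite lt_def zp sqrtr_ge0.
  by rewrite -(ler_pM2r zpos) -expr2.
rewrite E -(sq_sqrt_vn z) -(sq_sqrt_vn u) -exprMn mulrC.
rewrite lerXn2r //; first by rewrite nnegrE sqrtr_ge0.
by rewrite nnegrE mulr_ge0 ?opnorm_ge0 ?sqrtr_ge0.
Qed.
End Aux.
Section Perm.
Variable R : realType.
Variable N : nat.

Lemma perm_shift (F : 'S_N -> R) (t : 'S_N) : \sum_s F s = \sum_s F (t * s)%g.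
Proof. exact: (reindex_inj (mulgI t)). Qed.

Lemma sum_perm_all (h : 'I_N -> R) (s : 'S_N) : \sum_k h (s k) = \sum_j h j.
Proof. by symmetry; exact: (reindex_inj (@perm_inj _ s)). Qed.

Lemma sum_perm1 (h : 'I_N -> R) k :
  N%:R * \sum_(s : 'S_N) h (s k) = N`!%:R * \sum_j h j.
Proof.
have indep k' : \sum_(s : 'S_N) h (s k) = \sum_(s : 'S_N) h (s k').
  rewrite (perm_shift _ (tperm k' k)); apply: eq_bigr => s _.
  by rewrite permM tpermR.
transitivity (\sum_(k' < N) \sum_(s : 'S_N) h (s k')).
  by rewrite (eq_bigr _ (fun k' _ => esym (indep k'))) sumr_const card_ord mulr_natl.
rewrite exchange_big /= (eq_bigr _ (fun s _ => sum_perm_all h s)).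
by rewrite sumr_const card_Sn mulr_natl.
Qed.

Lemma sum_perm2 (f : 'I_N -> 'I_N -> R) k i : k != i ->
  N%:R * (N%:R - 1) * \sum_(s : 'S_N) f (s k) (s i) =
  N`!%:R * (\sum_j \sum_l f j l - \sum_j f j j).
Proof.
move=> nki.
pose T k i := \sum_(s : 'S_N) f (s k) (s i).
have indep k' i' : k' != i' -> T k i = T k' i'.
  move=> nki'.
  pose t1 := tperm k' k.
  pose m := t1 i.
  have mk : m != k'.
    by rewrite /m -(tpermR k' k) (inj_eq (@perm_inj _ t1)) eq_sym.
  pose t2 := tperm m i'.
  rewrite /T (perm_shift _ (t1 * t2)%g); apply: eq_bigr => s _.
  rewrite !permM /t2 -/m tpermL /t1 tpermR tpermD //; last by rewrite eq_sym.
have G : \sum_k' \sum_i' T k' i' = N`!%:R * \sum_j \sum_l f j l.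
  rewrite /T (eq_bigr (fun k' => \sum_(s : 'S_N) \sum_i' f (s k') (s i'))); last first.
    by move=> k' _; rewrite exchange_big.
  rewrite exchange_big /=.
  rewrite (eq_bigr (fun s : 'S_N => \sum_j \sum_l f j l)); last first.
    move=> s _; rewrite (eq_bigr (fun k' => \sum_l f (s k') l)).
      exact: (sum_perm_all (fun j => \sum_l f j l)).
    move=> k' _; exact: (sum_perm_all (f (s k'))).
  by rewrite sumr_const card_Sn mulr_natl.
have D : \sum_k' T k' k' = N`!%:R * \sum_j f j j.
  rewrite /T exchange_big /= (eq_bigr (fun s : 'S_N => \sum_j f j j)).
    by rewrite sumr_const card_Sn mulr_natl.
  move=> s _; exact: (sum_perm_all (fun j => f j j)).
have Row k' : \sum_i' T k' i' = T k' k' + (N%:R - 1) * T k i.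
  rewrite (bigD1 k') //=; congr (_ + _).
  rewrite (eq_bigr (fun _ => T k i)); last by move=> i' ni; rewrite (indep k' i') // eq_sym.
  have E : \sum_(i' < N) T k i = T k i + \sum_(i' < N | i' != k') T k i.
    by rewrite (bigD1 k').
  rewrite sumr_const card_ord /= in E.
  apply: (addrI (T k i)); rewrite -E -mulr_natl; ring.
have : \sum_k' \sum_i' T k' i' = \sum_k' T k' k' + N%:R * ((N%:R - 1) * T k i).
  by rewrite (eq_bigr _ (fun k' _ => Row k')) big_split /= sumr_const card_ord mulr_natl.
rewrite G D -/(T k i) => H. rewrite [in RHS]mulrBr H; ring.
Qed.

Lemma sum_inv : \sum_(k < N) ((N - k)%:R)^-1 = harm R N :> R.
Proof.
rewrite /harm [RHS](reindex_inj rev_ord_inj) /=; apply: eq_bigr => k _.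
have := ltn_ord k => hk.
by have -> : (N - k.+1).+1 = (N - k)%N by lia.
Qed.

Lemma sum_inv2 :
  \sum_(k < N) ((N - k)%:R)^-1 * (N - k.+1)%:R = N%:R - harm R N :> R.
Proof.
rewrite -sum_inv.
have -> : N%:R = \sum_(k < N) (1 : R) by rewrite sumr_const card_ord.
rewrite -sumrB; apply: eq_bigr => k _.
have := ltn_ord k => hk.
have -> : (N - k)%N = ((N - k.+1) + 1)%N by lia.
rewrite natrD; field.
have -> : ((N - k.+1)%:R + 1 : R) = ((N - k.+1) + 1)%N%:R by rewrite natrD.
by rewrite pnatr_eq0; lia.
Qed.

Lemma avg_formula (hN : (2 <= N)%N) (f : 'I_N -> 'I_N -> R) :
  (N`!%:R)^-1 * \sum_(s : 'S_N) \sum_(k < N)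
     (((N - k)%:R)^-1 * \sum_(i < N | (k <= i)%N) f (s k) (s i))
  = (harm R N - 1) / (N%:R - 1) * \sum_j f j j
    + (N%:R - harm R N) / (N%:R * (N%:R - 1)) * \sum_j \sum_l f j l.
Proof.
set A := \sum_j f j j.
set B := \sum_j \sum_l f j l.
have N0 : (N%:R : R) != 0 by rewrite pnatr_eq0; lia.
have N1 : (N%:R - 1 : R) != 0.
  have -> : (N%:R - 1 : R) = (N - 1)%N%:R by rewrite natrB //; lia.
  by rewrite pnatr_eq0; lia.
have F0 : (N`!%:R : R) != 0 by rewrite pnatr_eq0 -lt0n fact_gt0.
have Tdiag k : \sum_(s : 'S_N) f (s k) (s k) = N`!%:R / N%:R * A.
  have := sum_perm1 (fun j => f j j) k => /= h.
  by apply: (mulfI N0); rewrite h /A; field.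
have Toff k i : k != i -> \sum_(s : 'S_N) f (s k) (s i) =
    N`!%:R * (B - A) / (N%:R * (N%:R - 1)).
  move=> nki; have := sum_perm2 f nki => h.
  apply: (mulfI (mulf_neq0 N0 N1)); rewrite h /A /B; field.
  by apply/andP.
have Row (k : 'I_N) : \sum_(s : 'S_N) \sum_(i < N | (k <= i)%N) f (s k) (s i) =
   N`!%:R / N%:R * A + (N - k.+1)%:R * (N`!%:R * (B - A) / (N%:R * (N%:R - 1))).
  rewrite exchange_big /= (bigD1 k) //= Tdiag; congr (_ + _).
  rewrite (eq_bigr (fun _ => N`!%:R * (B - A) / (N%:R * (N%:R - 1)))); last first.
    by move=> i /andP [_ ni]; rewrite Toff // eq_sym.
  rewrite (eq_bigl (fun i : 'I_N => (k < i)%N)); last first.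
    by move=> i /=; rewrite ltn_neqAle eq_sym andbC.
  have -> : \sum_(i < N | (k < i)%N) N`!%:R * (B - A) / (N%:R * (N%:R - 1)) =
      \sum_(k.+1 <= i < N) (N`!%:R * (B - A) / (N%:R * (N%:R - 1)) : R).
    by rewrite big_geq_mkord.
  by rewrite sumr_const_nat [RHS]mulr_natl.
rewrite exchange_big /=.
rewrite (eq_bigr (fun k : 'I_N => ((N - k)%:R)^-1 *
   (N`!%:R / N%:R * A + (N - k.+1)%:R * (N`!%:R * (B - A) / (N%:R * (N%:R - 1)))))); last first.
  by move=> k _; rewrite -mulr_sumr Row.
rewrite (eq_bigr (fun k : 'I_N => ((N - k)%:R)^-1 * (N`!%:R / N%:R * A) +
   ((N - k)%:R)^-1 * (N - k.+1)%:R * (N`!%:R * (B - A) / (N%:R * (N%:R - 1))))); last first.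
  by move=> k _; ring.
rewrite big_split /= -!mulr_suml sum_inv sum_inv2.
by field; rewrite N0 N1 F0.
Qed.
End Perm.

Section Core.
Variable R : realType.

Definition qf n (x : 'cV[R]_n) (M : 'M[R]_n) := (x^T *m M *m x) 0 0.

Lemma qfD n (x : 'cV[R]_n) M1 M2 : qf x (M1 + M2) = qf x M1 + qf x M2.
Proof. by rewrite /qf mulmxDr mulmxDl mxE. Qed.

Lemma qfN n (x : 'cV[R]_n) M : qf x (- M) = - qf x M.
Proof. by rewrite /qf mulmxN mulNmx mxE. Qed.

Lemma qfB n (x : 'cV[R]_n) M1 M2 : qf x (M1 - M2) = qf x M1 - qf x M2.
Proof. by rewrite qfD qfN. Qed.

Lemma qfZ n (x : 'cV[R]_n) c M : qf x (c *: M) = c * qf x M.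
Proof. by rewrite /qf -scalemxAr -scalemxAl mxE. Qed.

Lemma qf0 n (x : 'cV[R]_n) : qf x 0 = 0.
Proof. by rewrite /qf mulmx0 mul0mx mxE. Qed.

Lemma qf_sum n (x : 'cV[R]_n) (I : Type) (r : seq I) (P : pred I) (F : I -> 'M[R]_n) :
  qf x (\sum_(i <- r | P i) F i) = \sum_(i <- r | P i) qf x (F i).
Proof.
elim/big_rec2: _ => [|i y M _ <-]; first exact: qf0.
by rewrite qfD.
Qed.

Lemma harm_bounds N : (2 <= N)%N -> 1 <= harm R N /\ harm R N < N%:R.
Proof.
case: N => [|[|n]] // _.
rewrite /harm big_ord_recl /= invr1.
have h0 : 0 <= \sum_(i < n.+1) ((bump 0 i).+1%:R : R)^-1.
  by apply: sumr_ge0 => i _; rewrite invr_ge0.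
have h1 : \sum_(i < n.+1) ((bump 0 i).+1%:R : R)^-1 <= \sum_(i < n.+1) (2 : R)^-1.
  apply: ler_sum => i _; rewrite lef_pV2 ?posrE //.
  by rewrite /bump leq0n add1n ler_nat.
rewrite sumr_const card_ord in h1.
split; first lra.
have -> : (n.+2%:R : R) = 2 + n%:R by rewrite -natrD add2n.
have : (2 : R)^-1 *+ n.+1 = (n%:R + 1) / 2.
  by rewrite -(mulr_natl ((2:R)^-1) n.+1) -natr1 mulrC.
move=> E; rewrite E in h1.
have : (0 : R) <= n%:R by rewrite ler0n.
lra.
Qed.

Lemma core N (hN : (2 <= N)%N) n (u : 'I_N -> 'cV[R]_n) (D : 'I_N -> 'M[R]_n) (a b : R)
  (hA : forall j, qf (u j) (D j) <= a * vnorm2 (u j))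
  (hB : forall j, qf (u j) ((N%:R)^-1 *: \sum_l D l) <= b * vnorm2 (u j)) :
  (N`!%:R)^-1 * \sum_(s : 'S_N) \sum_(k < N)
     (((N - k)%:R)^-1 * \sum_(i < N | (k <= i)%N) qf (u (s k)) (D (s i)))
  <= ((b + epsN R N * a) / (1 + epsN R N)) * \sum_k vnorm2 (u k).
Proof.
rewrite (avg_formula hN (fun j l => qf (u j) (D l))).
have [H1 HN] := harm_bounds hN.
set H := harm R N in H1 HN *.
set U := \sum_k vnorm2 (u k).
have N0 : (0 : R) < N%:R by rewrite ltr0n; lia.
have N1 : (1 : R) < N%:R by rewrite ltr1n.
have hAs : \sum_j qf (u j) (D j) <= a * U.
  by rewrite /U mulr_sumr; apply: ler_sum => j _.
have hBs : \sum_j \sum_l qf (u j) (D l) <= N%:R * (b * U).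
  rewrite /U mulr_sumr mulr_sumr; apply: ler_sum => j _.
  have := hB j; rewrite qfZ qf_sum => h.
  have hNi : (0:R) < N%:R^-1 by rewrite invr_gt0.
  by rewrite -(ler_pM2l hNi) [X in _ <= X]mulrA mulVf ?mul1r // gt_eqF.
have E : (b + epsN R N * a) / (1 + epsN R N) =
    (N%:R - H) / (N%:R - 1) * b + (H - 1) / (N%:R - 1) * a.
  rewrite /epsN -/H.
  have -> : 1 + (H - 1) / (N%:R - H) = (N%:R - 1) / (N%:R - H).
    by field; rewrite subr_eq0 gt_eqF.
  field; rewrite !subr_eq0 !gt_eqF //.
rewrite E.
have c1 : 0 <= (H - 1) / (N%:R - 1) by rewrite divr_ge0 // subr_ge0 // ltW.
have c2 : 0 <= (N%:R - H) / (N%:R * (N%:R - 1)).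
  by rewrite divr_ge0 ?mulr_ge0 // subr_ge0 ltW.
have e1 := ler_wpM2l c1 hAs.
have e2 := ler_wpM2l c2 hBs.
apply: (le_trans (lerD e1 e2)).
rewrite le_eqVlt; apply/orP; left; apply/eqP.
field; rewrite !subr_eq0 !gt_eqF //.
Qed.
End Core.

Section Main.
Variable R : realType.

Lemma qf_conj1 p q (W : 'M[R]_(p, q)) (S : 'M[R]_q) x :
  qf x (W *m S *m W^T) = qf (W^T *m x) S.
Proof. by rewrite /qf trmx_mul trmxK !mulmxA. Qed.

Lemma qf_conj2 p q (V : 'M[R]_(p, q)) (S : 'M[R]_p) x :
  qf x (V^T *m S *m V) = qf (V *m x) S.
Proof. by rewrite /qf trmx_mul !mulmxA. Qed.

Lemma qf_WWt p q (W : 'M[R]_(p, q)) x : qf x (W *m W^T) = vnorm2 (W^T *m x).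
Proof. by rewrite -dot_self /qf trmx_mul trmxK !mulmxA. Qed.

Lemma qf_VtV p q (V : 'M[R]_(p, q)) x : qf x (V^T *m V) = vnorm2 (V *m x).
Proof. by rewrite -dot_self /qf trmx_mul !mulmxA. Qed.

Lemma qf_psd n (L M : 'M[R]_n) : (forall x, qf x L <= qf x M) -> psd_le L M.
Proof. by move=> h x; rewrite -/(qf x (M - L)) qfB subr_ge0. Qed.

End Main.

Unset Implicit Arguments.
Set Strict Implicit.

Theorem lemma11 (R : realType) (N p q r qt : nat) (hN : (2 <= N)%N)
  (W : 'I_N -> 'M[R]_(p, q)) (X : 'I_N -> 'M[R]_(q, r))
  (Xt : 'I_N -> 'M[R]_(p, qt)) (V : 'I_N -> 'M[R]_(qt, r)) :
  let Xb := mean X in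
  let Xtb := mean Xt in
  let Sigma := (N%:R)^-1 *: \sum_(k < N) ((X k - Xb) *m (X k - Xb)^T) in
  let Sigmat := (N%:R)^-1 *: \sum_(k < N) ((Xt k - Xtb)^T *m (Xt k - Xtb)) in
  let sig2X := opnorm Sigma
      + epsN R N * \big[Num.max/0]_(k < N) (opnorm (X k - Xb)) ^+ 2 in
  let sig2Xt := opnorm Sigmat
      + epsN R N * \big[Num.max/0]_(k < N) (opnorm (Xt k - Xtb)) ^+ 2 in
  let Sge (s : 'S_N) (k : 'I_N) : 'M[R]_q :=
      ((N - k)%:R)^-1 *: \sum_(i < N | (k <= i)%N)
         ((X (s i) - Xb) *m (X (s i) - Xb)^T) in
  let Stge (s : 'S_N) (k : 'I_N) : 'M[R]_qt :=
      ((N - k)%:R)^-1 *: \sum_(i < N | (k <= i)%N)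
         ((Xt (s i) - Xtb)^T *m (Xt (s i) - Xtb)) in
  psd_le ((N`!%:R)^-1 *: \sum_(s : 'S_N) \sum_(k < N)
            (W (s k) *m Sge s k *m (W (s k))^T))
         ((sig2X / (1 + epsN R N)) *: \sum_(k < N) (W k *m (W k)^T))
  /\
  psd_le ((N`!%:R)^-1 *: \sum_(s : 'S_N) \sum_(k < N)
            ((V (s k))^T *m Stge s k *m V (s k)))
         ((sig2Xt / (1 + epsN R N)) *: \sum_(k < N) ((V k)^T *m V k)).
Proof.
move=> Xb Xtb Sigma Sigmat sig2X sig2Xt Sge Stge.
split; apply: qf_psd => x.
- rewrite !qfZ !qf_sum.
  under eq_bigr => s _ do rewrite qf_sum.
  under eq_bigr => s _ do under eq_bigr => k _ do rewrite qf_conj1 /Sge qfZ qf_sum.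
  under [X in _ <= _ * X]eq_bigr => k _ do rewrite qf_WWt.
  apply: (core hN (u := fun j => (W j)^T *m x)
            (D := fun l => (X l - Xb) *m (X l - Xb)^T)).
  + move=> j; apply: (le_trans (bound_YYt _ _)).
    apply: ler_wpM2r; first exact: vnorm2_ge0.
    exact: (le_bigmax _ (fun k => opnorm (X k - Xb) ^+ 2)).
  + move=> j; exact: bound_S.
- rewrite !qfZ !qf_sum.
  under eq_bigr => s _ do rewrite qf_sum.
  under eq_bigr => s _ do under eq_bigr => k _ do rewrite qf_conj2 /Stge qfZ qf_sum.
  under [X in _ <= _ * X]eq_bigr => k _ do rewrite qf_VtV.
  apply: (core hN (u := fun j => V j *m x)
            (D := fun l => (Xt l - Xtb)^T *m (Xt l - Xtb))).
  + move=> j; apply: (le_trans (bound_YtY _ _)).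
    apply: ler_wpM2r; first exact: vnorm2_ge0.
    exact: (le_bigmax _ (fun k => opnorm (Xt k - Xtb) ^+ 2)).
  + move=> j; exact: bound_S.
Qed.
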